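(* Let $G=(K\cup I,E)$ be a split graph such that no vertex $i\in I$ satisfies $N(i)=K$, and let $(V,\mathcal{F})$ be its split graph vertex shelling antimatroid. Then the number of paths of $(V,\mathcal{F})$ equals $|V|$ plus the number of edges of $G$ having one endpoint in $K$ and the other in $I$.
   Context: A split graph $G=(K\cup I,E)$ is a finite simple graph whose vertex set $V=K\cup I$ comes with a fixed partition into a clique $K$ and an independent set $I$. $N(v)$ is the set of neighbours of $v$. A vertex is simplicial if its neighbours induce a clique. The split graph vertex shelling antimatroid of $G$ is $(V,\mathcal{F})$ where $F\subseteq V$ is feasible iff there is an ordering $f_1,\dots,f_{|F|}$ of $F$ such that each $f_j$ is simplicial in $G$ minus $\{f_1,\dots,f_{j-1}\}$ (the empty set is feasible). A path of an antimatroid $(V,\mathcal{F})$ is a nonempty feasible set that is not the union of two feasible sets both different from it (equivalently, a feasible set containing exactly one element whose removal leaves a feasible set). *)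

(* Defs.v *)
From mathcomp Require Import all_boot.
From Stdlib Require Import ClassicalEpsilon.
Set Implicit Arguments. Unset Strict Implicit. Unset Printing Implicit Defensive.

Definition simple_graph (T : finType) (e : rel T) : Prop :=
  symmetric e /\ irreflexive e.

(* Split graph with fixed partition: K a clique, the complement I := ~: K
   an independent set. *)
Definition split_partition (T : finType) (e : rel T) (K : {set T}) : Prop :=
  (forall x y, x \in K -> y \in K -> x != y -> e x y) /\
  (forall x y, x \notin K -> y \notin K -> ~~ e x y).

Definition nbhd (T : finType) (e : rel T) (v : T) : {set T} := [set u | e v u].

Definition simplicial_in (T : finType) (e : rel T) (W : {set T}) (v : T) : bool :=
  [forall x, forall y,
     [&& x \in W, y \in W, e v x, e v y & x != y] ==> e x y].

(* The ordering s = f_1 ... f_k is a shelling: each f_j is simplicial in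
   G minus {f_1,...,f_{j-1}}; here 'removed' is the set already deleted. *)
Fixpoint shelling_seq (T : finType) (e : rel T) (removed : {set T}) (s : seq T)
  : bool :=
  match s with
  | [::] => true
  | x :: s' => simplicial_in e (~: removed) x && shelling_seq e (x |: removed) s'
  end.

Definition feasible (T : finType) (e : rel T) (F : {set T}) : Prop :=
  exists s : seq T, [/\ uniq s, F = [set x in s] & shelling_seq e set0 s].

Definition is_path (T : finType) (e : rel T) (F : {set T}) : Prop :=
  [/\ feasible e F, F != set0 &
      ~ (exists A B : {set T}, [/\ feasible e A, feasible e B,
                                  A != F, B != F & F = A :|: B])].

Definition asbool (P : Prop) : bool :=
  if excluded_middle_informative P then true else false.

(* Main.v *)
Require Import Defs.
From mathcomp Require Import all_boot.
From Stdlib Require Import ClassicalEpsilon.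
Set Implicit Arguments. Unset Strict Implicit. Unset Printing Implicit Defensive.

Section Gen.
Variable T : finType.
Variable e : rel T.

Lemma shell_cat (R : {set T}) (s t : seq T) :
  shelling_seq e R (s ++ t) =
  shelling_seq e R s && shelling_seq e (R :|: [set x in s]) t.
Proof.
elim: s R => [|x s IH] R /=.
  by congr shelling_seq; apply/setP => y; rewrite !inE orbF.
rewrite IH andbA; congr (_ && shelling_seq _ _ _).
by apply/setP => y; rewrite !inE; case: (y == x); case: (y \in R); rewrite ?orbT.
Qed.

Lemma shell_all (R : {set T}) (t : seq T) :
  (forall x, x \in t -> forall W : {set T}, W \subset ~: R -> simplicial_in e W x) ->
  shelling_seq e R t.
Proof.
elim: t R => [|x t IH] R H //=.
rewrite H ?mem_head ?subxx //=.
apply: IH => y yt W sW; apply: H; first by rewrite in_cons yt orbT.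
apply: (subset_trans sW); rewrite setCS; exact: subsetUr.
Qed.

Lemma shell_pos (R : {set T}) (s : seq T) (x : T) : shelling_seq e R s -> x \in s ->
  simplicial_in e (~: (R :|: [set y in take (index x s) s])) x.
Proof.
elim: s R => [|a s IH] R //=.
move=> /andP[Ha Hs]; rewrite in_cons; case: eqP => [-> _|nxa /= xs].
  rewrite /= eqxx /=.
  suff -> : R :|: [set y in [::]] = R by [].
  by apply/setP => y; rewrite !inE orbF.
rewrite eq_sym (introF eqP nxa) /=.
have := IH _ Hs xs.
suff -> : (a |: R) :|: [set y in take (index x s) s] =
          R :|: [set y in a :: take (index x s) s] by [].
by apply/setP => y; rewrite !inE; case: (y == a); case: (y \in R); rewrite ?orbT.
Qed.

Lemma feas0 : feasible e set0.
Proof. by exists [::]; split => //; apply/setP => y; rewrite !inE. Qed.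

Lemma feas_add (F A : {set T}) : feasible e F ->
  (forall x, x \in A -> forall W : {set T}, W \subset ~: F -> simplicial_in e W x) ->
  feasible e (F :|: A).
Proof.
move=> [s [us -> ss]] H.
exists (s ++ enum (A :\: [set x in s])); split.
- rewrite cat_uniq us enum_uniq andbT /=; apply/hasPn => y.
  by rewrite mem_enum !inE => /andP[].
- apply/setP => y; rewrite !inE mem_cat mem_enum !inE.
  by case: (y \in s); case: (y \in A).
- rewrite shell_cat ss /= set0U; apply: shell_all => y.
  rewrite mem_enum !inE => /andP[_ yA]; exact: H.
Qed.

Lemma asboolP (P : Prop) : asbool P <-> P.
Proof. by rewrite /asbool; case: excluded_middle_informative. Qed.
Lemma min_path (F : {set T}) x : feasible e F -> x \in F ->
  (forall A, feasible e A -> x \in A -> A \subset F -> A = F) -> is_path e F.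
Proof.
move=> fF xF H; split => //; first by apply/set0Pn; exists x.
move=> [A [B [fA fB nA nB FE]]].
have : x \in A :|: B by rewrite -FE.
case/setUP => xx.
  by move: nA; rewrite (H _ fA xx) ?eqxx // FE subsetUl.
by move: nB; rewrite (H _ fB xx) ?eqxx // FE subsetUr.
Qed.

Lemma path_last (F : {set T}) : is_path e F -> exists x, exists F',
  [/\ feasible e F, feasible e F', x \notin F', F = x |: F' &
      (forall A, feasible e A -> x \in A -> A \subset F -> A = F)].
Proof.
case=> [[s [us FE ss]] Fn Hn].
have fF : feasible e F by exists s.
case/lastP: s us FE ss => [|s' x] us FE ss.
  by move: Fn; rewrite FE => /set0Pn [y]; rewrite inE.
move: us; rewrite rcons_uniq => /andP[xs' us'].
move: ss; rewrite -cats1 shell_cat => /andP[ss' _].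
have fF' : feasible e [set y in s'] by exists s'.
have xF' : x \notin [set y in s'] by rewrite inE.
have FE' : F = x |: [set y in s'].
  by rewrite FE; apply/setP => y; rewrite !inE mem_rcons in_cons.
exists x, [set y in s']; split => // A fA xA AF.
apply/eqP; apply/negPn/negP => nAF; apply: Hn; exists A, [set y in s']; split => //.
  apply/eqP => E'; move: xF'; by rewrite E' FE' setU11.
apply/setP => y; apply/idP/idP.
  rewrite FE' => /setU1P[->|yF]; first by rewrite inE xA.
  by rewrite inE yF orbT.
case/setUP => [/(subsetP AF)//|]; rewrite FE' => yF; by rewrite inE yF orbT.
Qed.

End Gen.

Section Split.
Variable T : finType.
Variable e : rel T.
Variable K : {set T}.
Hypothesis Hsym : symmetric e.
Hypothesis Hirr : irreflexive e.
Hypothesis HK : forall x y, x \in K -> y \in K -> x != y -> e x y.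
Hypothesis HI : forall x y, x \notin K -> y \notin K -> ~~ e x y.

Lemma simp_use (W : {set T}) x y z : simplicial_in e W x -> y \in W -> z \in W ->
  e x y -> e x z -> y != z -> e y z.
Proof.
move=> /forallP/(_ y)/forallP/(_ z)/implyP H yW zW xy xz yz; apply: H.
by rewrite yW zW xy xz yz.
Qed.

Lemma nbK x y : x \notin K -> e x y -> y \in K.
Proof. by move=> xK xy; apply/negPn/negP => yK; move: (HI xK yK); rewrite xy. Qed.

Lemma simp_I (W : {set T}) x : x \notin K -> simplicial_in e W x.
Proof.
move=> xK; apply/forallP=> y; apply/forallP=> z; apply/implyP => /and5P[_ _ xy xz nyz].
by apply: HK => //; apply: nbK xK _.
Qed.

Lemma simp_K (W : {set T}) x : (forall z, z \notin K -> e x z -> z \notin W) ->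
  simplicial_in e W x.
Proof.
move=> H; apply/forallP=> y; apply/forallP=> z; apply/implyP => /and5P[yW zW xy xz nyz].
apply: HK => //.
  by apply/negPn/negP => yK; move: (H _ yK xy); rewrite yW.
by apply/negPn/negP => zK; move: (H _ zK xz); rewrite zW.
Qed.

Lemma simp_last (W : {set T}) k j : k \in K -> j \notin K ->
  (forall z, z \notin K -> e k z -> z \in W -> z = j) ->
  (forall y, y \in K -> y \in W -> y != k -> e j y) ->
  simplicial_in e W k.
Proof.
move=> kK jK H1 H2; apply/forallP=> y; apply/forallP=> z;
  apply/implyP => /and5P[yW zW xy xz nyz].
have nk : forall t, e k t -> t != k.
  by move=> t kt; apply/eqP => tk; move: kt; rewrite tk Hirr.
case yK: (y \in K); case zK: (z \in K).
- exact: HK.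
- have -> := H1 z (negbT zK) xz zW; rewrite Hsym; exact: H2 yK yW (nk _ xy).
- have -> := H1 y (negbT yK) xy yW; exact: H2 zK zW (nk _ xz).
- have ey := H1 y (negbT yK) xy yW; have ez := H1 z (negbT zK) xz zW.
  by move: nyz; rewrite ey ez eqxx.
Qed.

Definition NI x := [set z | (z \notin K) && e x z].
Definition Sj j := [set m | (m \in K) && ~~ e j m].
Definition NS j := [set z | (z \notin K) && [exists m, (m \in Sj j) && e m z]].
Definition core k j := ((NI k :\ j) :|: NS j) :|: Sj j.
Definition Q k j := k |: core k j.
Definition Pk x := if x \in K then x |: NI x else [set x].

Lemma feas_core k j : feasible e (core k j).
Proof.
rewrite /core -[_ :|: NS j]set0U; apply: feas_add; first apply: feas_add.
- exact: feas0.
- move=> x; rewrite !inE => /orP[/and3P[_ xK _]|/andP[xK _]] W _; exact: simp_I.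
- move=> m; rewrite !inE => /andP[mK njm] W sW; apply: simp_K => z zK mz.
  apply/negP => zW; move/subsetP: sW => /(_ _ zW); rewrite !inE.
  rewrite zK /=; case/norP => _ /negP; apply; apply/existsP; exists m.
  by rewrite !inE mK mz njm.
Qed.

Lemma k_notin_core k j : k \in K -> e k j -> k \notin core k j.
Proof.
by move=> kK kj; rewrite !inE kK /= andbF Hsym kj.
Qed.

Lemma j_notin_Q k j : k \in K -> j \notin K -> j \notin Q k j.
Proof.
move=> kK jK; rewrite !inE eqxx /= (negbTE jK) /= orbF; apply/norP; split.
- by apply/eqP => jk; move: kK; rewrite -jk (negbTE jK).
- apply/existsP => -[m]; rewrite !inE => /andP[/andP[_ njm] mj].
  by move: njm; rewrite Hsym mj.
Qed.

Lemma feas_Q k j : k \in K -> j \notin K -> e k j -> feasible e (Q k j).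
Proof.
move=> kK jK kj; rewrite /Q setUC; apply: feas_add; first exact: feas_core.
move=> x; rewrite inE => /eqP -> W sW; apply: (@simp_last W k j kK jK).
- move=> z zK kz zW; apply/eqP; apply/negPn/negP => zj.
  move/subsetP: sW => /(_ _ zW); rewrite !inE zj zK kz.
  by rewrite /=.
- move=> y yK yW yk; apply/negPn/negP => njy.
  move/subsetP: sW => /(_ _ yW); rewrite !inE yK njy.
  by rewrite /= !orbT.
Qed.

Lemma feas_P x : feasible e (Pk x).
Proof.
rewrite /Pk; case: ifP => xK.
  rewrite setUC -[NI x]set0U; apply: feas_add; first apply: feas_add.
  - exact: feas0.
  - move=> z; rewrite !inE => /andP[zK _] W _; exact: simp_I.
  - move=> y; rewrite inE => /eqP -> W sW; apply: simp_K => z zK xz.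
    apply/negP => zW; move/subsetP: sW => /(_ _ zW); rewrite !inE zK xz.
    by rewrite /=.
rewrite -[[set x]]set0U; apply: feas_add; first exact: feas0.
move=> y; rewrite inE => /eqP -> W _; apply: simp_I; by rewrite xK.
Qed.

Lemma key F k j : feasible e F -> k \in F -> k \in K -> j \notin F ->
  j \notin K -> e k j -> Q k j \subset F.
Proof.
move=> [s [us -> ss]] kF kK jF jK kj.
rewrite inE in kF; rewrite inE in jF.
have Hk := shell_pos ss kF; rewrite set0U in Hk.
set R := [set y in take (index k s) s] in Hk.
have RF : forall y, y \in R -> y \in s by move=> y; rewrite inE => /mem_take.
have jW : j \in ~: R by rewrite inE; apply/negP => /RF; rewrite (negbTE jF).
have A : forall z, z \notin K -> e k z -> z != j -> z \in R.
  move=> z zK kz zj; apply/negPn/negP => zR.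
  have zW : z \in ~: R by rewrite inE zR.
  have := simp_use Hk zW jW kz kj zj.
  by rewrite (negbTE (HI zK jK)).
have nmk : forall m, ~~ e j m -> m != k.
  by move=> m njm; apply/eqP => mk; move: njm; rewrite mk Hsym kj.
have B : forall m, m \in K -> ~~ e j m -> m \in R.
  move=> m mK njm; apply/negPn/negP => mR.
  have mW : m \in ~: R by rewrite inE mR.
  have mj : m != j by apply/eqP => mj; move: mK; rewrite mj (negbTE jK).
  have km : k != m by rewrite eq_sym nmk.
  have := simp_use Hk mW jW (HK kK mK km) kj mj.
  by rewrite Hsym (negbTE njm).
apply/subsetP => x; rewrite /Q /core !inE.
move=> /orP[/eqP->//|/orP[/orP[/andP[xj /andP[xK kx]]|H]|/andP[xK njx]]].
- exact: RF (A _ xK kx xj).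
- case/andP: H => xK /existsP[m /andP[mS mx]]; move: mS; rewrite inE => /andP[mK njm].
  have mR := B m mK njm.
  case kx: (e k x).
    apply: RF; apply: A => //; apply/eqP => xj; move: njm; by rewrite -xj Hsym mx.
  apply/negPn/negP => xs.
  have ms := RF _ mR.
  have Hm := shell_pos ss ms; rewrite set0U in Hm.
  have kWm : k \in ~: [set y in take (index m s) s].
    rewrite !inE in_take // -leqNgt; apply: ltnW; by rewrite inE in_take // in mR.
  have xWm : x \in ~: [set y in take (index m s) s].
    by rewrite !inE; apply/negP => /mem_take; rewrite (negbTE xs).
  have kx' : k != x by apply/eqP => kx'; move: kK; rewrite kx' (negbTE xK).
  have := simp_use Hm kWm xWm (HK mK kK (nmk _ njm)) mx kx'.
  by rewrite kx.
- exact: RF (B _ xK njx).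
Qed.

Hypothesis Hn : forall i, i \notin K -> nbhd e i != K.

Lemma exists_nonnb j : j \notin K -> exists2 m, m \in K & ~~ e j m.
Proof.
move=> jK; have : ~~ (K \subset nbhd e j).
  apply/negP => sub; apply: (negP (Hn jK)); rewrite eqEsubset sub andbT.
  by apply/subsetP => u; rewrite inE => ju; exact: nbK jK ju.
by case/subsetPn => m mK; rewrite inE => nym; exists m.
Qed.

Lemma Pk_min x A : feasible e A -> x \in A -> A \subset Pk x -> A = Pk x.
Proof.
move=> fA xA AS; apply/eqP; rewrite eqEsubset AS /=; move: AS; rewrite /Pk.
case: ifP => xK AS; last by rewrite sub1set.
apply/subsetP => y; move=> /setU1P[->//|]; rewrite inE => /andP[yK xy].
apply/negPn/negP => yA.
have QA := key fA xA xK yA yK xy.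
have [m mK nym] := exists_nonnb yK.
have : m \in Pk x.
  rewrite /Pk xK; apply: (subsetP AS); apply: (subsetP QA).
  by rewrite !inE mK nym !orbT.
rewrite /Pk xK !inE mK /= orbF => /eqP mx.
by move: nym; rewrite mx Hsym xy.
Qed.

Lemma Q_min k j A : k \in K -> j \notin K -> e k j ->
  feasible e A -> k \in A -> A \subset Q k j -> A = Q k j.
Proof.
move=> kK jK kj fA kA AS; apply/eqP; rewrite eqEsubset AS /=.
apply: key => //; apply/negP => /(subsetP AS); exact/negP/j_notin_Q.
Qed.

Lemma feas_Qk k j : k \in K -> e k j -> feasible e (Q k j :\ k).
Proof. move=> kK kj; rewrite /Q setU1K; [exact: feas_core | exact: k_notin_core]. Qed.

Lemma in_Pk x : x \in Pk x.
Proof. by rewrite /Pk; case: ifP => _; rewrite !inE eqxx. Qed.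

Lemma PkK z y : z \in Pk y -> z \in K -> z = y.
Proof.
rewrite /Pk; case: ifP => yK; rewrite !inE; last by move/eqP.
by case/predU1P => // /andP[/negP].
Qed.

Lemma Pk_inj : injective Pk.
Proof.
move=> x y E.
case xK: (x \in K); first by apply: PkK xK; rewrite -E in_Pk.
have : y \in Pk x by rewrite E in_Pk.
by rewrite /Pk xK inE => /eqP.
Qed.

Definition Edg := [set p : T * T | [&& p.1 \in K, p.2 \notin K & e p.1 p.2]].

Lemma Q_inj : {in Edg &, injective (fun p => Q p.1 p.2)}.
Proof.
move=> [k j] [k' j']; rewrite !inE /= => /and3P[kK jK kj] /and3P[kK' jK' kj'] E.
have kk : k = k'.
  apply/eqP; apply/negPn/negP => nk.
  have k'Q : k' \in Q k j by rewrite E /Q setU11.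
  have H1 : k' \in Q k j :\ k by rewrite in_setD1 eq_sym nk k'Q.
  have H2 : Q k j :\ k \subset Q k' j' by rewrite -E subD1set.
  have E2 := Q_min kK' jK' kj' (feas_Qk kK kj) H1 H2.
  by move: (setD11 k (Q k j)); rewrite E2 -E /Q setU11.
subst k'; congr pair; apply/eqP; apply/negPn/negP => nj.
have : j' \in Q k j by rewrite !inE (eq_sym j' j) nj jK' kj' /= orbT.
by rewrite E; apply/negP/j_notin_Q.
Qed.

Lemma PQ_disj x k j : (k, j) \in Edg -> Pk x != Q k j.
Proof.
rewrite inE /= => /and3P[kK jK kj]; apply/eqP => E.
case: (eqVneq x k) => [xk|nxk].
  subst x; have : j \in Pk k by rewrite /Pk kK !inE jK kj orbT.
  by rewrite E; apply/negP/j_notin_Q.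
have H1 : x \in Q k j :\ k by rewrite in_setD1 nxk -E in_Pk.
have H2 : Q k j :\ k \subset Pk x by rewrite E subD1set.
have E2 := Pk_min (feas_Qk kK kj) H1 H2.
by move: (setD11 k (Q k j)); rewrite E2 E /Q setU11.
Qed.

Lemma paths_eq : [set F : {set T} | asbool (is_path e F)] =
  (Pk @: setT) :|: ((fun p => Q p.1 p.2) @: Edg).
Proof.
apply/setP => F; rewrite inE; apply/idP/idP.
  move/asboolP => /path_last [x [F' [fF fF' xF' FE Hmin]]].
  have xF : x \in F by rewrite FE setU11.
  case xK: (x \in K).
    case: (boolP [exists z, (z \in NI x) && (z \notin F')]).
      case/existsP => j /andP[]; rewrite inE => /andP[jK xj] jF'.
      have jF : j \notin F.
        rewrite FE !inE negb_or jF' andbT; apply/eqP => jx; move: xK; by rewrite -jx (negbTE jK).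
      have QF := key fF xF xK jF jK xj.
      have <- := Hmin _ (feas_Q xK jK xj) (setU11 _ _) QF.
      apply/setUP; right; apply/imsetP; exists (x, j) => //; by rewrite inE /= xK jK xj.
    rewrite negb_exists => /forallP H.
    have PF : Pk x \subset F.
      apply/subsetP => y; rewrite /Pk xK => /setU1P[->//|yN].
      by move: (H y); rewrite yN /= negbK FE => yF; rewrite inE yF orbT.
    have <- := Hmin _ (feas_P x) (in_Pk x) PF.
    by apply/setUP; left; apply/imsetP; exists x.
  have PF : Pk x \subset F by rewrite /Pk xK sub1set.
  have <- := Hmin _ (feas_P x) (in_Pk x) PF.
  by apply/setUP; left; apply/imsetP; exists x.
case/setUP => /imsetP.
  case=> x _ ->; apply/asboolP; apply: (min_path (feas_P x) (in_Pk x)) => A fA xA AS.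
  exact: Pk_min.
case=> [[k j]] pE ->; move: (pE); rewrite inE /= => /and3P[kK jK kj].
apply/asboolP; apply: (min_path (feas_Q kK jK kj) (setU11 _ _)) => A fA kA AS.
exact: Q_min.
Qed.

Lemma main_card : #|[set F : {set T} | asbool (is_path e F)]| =
    #|T| + #|[set p : T * T | [&& p.1 \in K, p.2 \notin K & e p.1 p.2]]|.
Proof.
rewrite paths_eq cardsU card_imset; last exact: Pk_inj.
rewrite card_in_imset; last exact: Q_inj.
have -> : #|(Pk @: setT) :&: ((fun p => Q p.1 p.2) @: Edg)| = 0.
  apply/eqP; rewrite cards_eq0; apply/eqP/setP => F; rewrite !inE.
  apply/negP => /andP[/imsetP[x _ ->] /imsetP[[k j] pE /= E]].
  by move: (PQ_disj x pE); rewrite E eqxx.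
by rewrite subn0 cardsT.
Qed.

End Split.

Theorem mainTheorem11 (T : finType) (e : rel T) (K : {set T}) :
  simple_graph e ->
  split_partition e K ->
  (forall i : T, i \notin K -> nbhd e i != K) ->
  #|[set F : {set T} | asbool (is_path e F)]| =
    #|T| + #|[set p : T * T | [&& p.1 \in K, p.2 \notin K & e p.1 p.2]]|.
Proof.
move=> [Hsym Hirr] [HK HI] Hn.
exact: (main_card Hsym Hirr HK HI Hn).
Qed.
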